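(* Let $\mathbf{L}=(L,\le)$ be a finite nontrivial join-semilattice with greatest element $1$ and let $(R,\vee,\circ)$ be a subsemiring of $(\mathrm{JM}(\mathbf{L}),\vee,\circ)$ such that (i) $k_a\in R$ for every $a\in L$; (ii) for every $f\in R$ there exists $a\in L$ with $k_a\le f$ (pointwise); (iii) for all $a\in L$ and all $b\in L\setminus\{1\}$ there exists $f\in R$ with $f(x)=b$ whenever $x\le a$ and $f(x)>b$ otherwise. Then $(R,\vee,\circ)$ is a finite simple additively idempotent semiring whose greatest element is left but not right absorbing. Conversely, every finite simple additively idempotent semiring $(S,+,\cdot)$ with $|S|>2$ whose greatest element is left but not right absorbing is isomorphic to such a semiring $(R,\vee,\circ)$ for some such semilattice $\mathbf{L}$.
   Context: A semiring is a nonempty set with a commutative semigroup operation $+$ and a semigroup operation $\cdot$ satisfying both distributive laws. It is simple if its only congruences are the identity and the full relation; additively idempotent if $r+r=r$; then $x\le y:\Leftrightarrow x+y=y$ is a partial order, and for finite semirings the greatest element is the sum of all elements. An element $r$ is right absorbing if $sr=r$ for all $s$, left absorbing if $rs=r$ for all $s$. For a finite join-semilattice $\mathbf{L}$, $\mathrm{JM}(\mathbf{L})$ is the set of maps $f:L\to L$ with $f(x\vee y)=f(x)\vee f(y)$, a semiring under pointwise join and composition. For $a\in L$, $k_a$ is the constant map with value $a$. *)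

(* Defs.v *)
From HB Require Import structures.
From mathcomp Require Import all_boot all_order.
Set Implicit Arguments. Unset Strict Implicit. Unset Printing Implicit Defensive.
Import Order.TTheory.
Local Open Scope order_scope.

(* A semiring (S,+,.) whose carrier is the set of elements of T satisfying P.
   For an abstract semiring use P := fun _ => True. *)
Definition semiring_on (T : Type) (P : T -> Prop) (add mul : T -> T -> T) : Prop :=
  [/\ (exists x, P x),
      (forall x y, P x -> P y -> P (add x y) /\ P (mul x y)),
      (forall x y z, P x -> P y -> P z ->
          add (add x y) z = add x (add y z) /\ mul (mul x y) z = mul x (mul y z)),
      (forall x y, P x -> P y -> add x y = add y x) &
      (forall x y z, P x -> P y -> P z ->
          mul x (add y z) = add (mul x y) (mul x z) /\
          mul (add x y) z = add (mul x z) (mul y z))].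

Definition add_idempotent_on (T : Type) (P : T -> Prop) (add : T -> T -> T) :=
  forall x, P x -> add x x = x.

Definition congruence_on (T : Type) (P : T -> Prop) (add mul : T -> T -> T)
    (r : T -> T -> Prop) : Prop :=
  [/\ (forall x, P x -> r x x),
      (forall x y, P x -> P y -> r x y -> r y x),
      (forall x y z, P x -> P y -> P z -> r x y -> r y z -> r x z) &
      (forall a b c d, P a -> P b -> P c -> P d -> r a b -> r c d ->
          r (add a c) (add b d) /\ r (mul a c) (mul b d))].

Definition simple_on (T : Type) (P : T -> Prop) (add mul : T -> T -> T) : Prop :=
  forall r, congruence_on P add mul r ->
    (forall x y, P x -> P y -> r x y -> x = y) \/
    (forall x y, P x -> P y -> r x y).

(* t is the greatest element w.r.t. x <= y :<-> x + y = y *)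
Definition greatest_on (T : Type) (P : T -> Prop) (add : T -> T -> T) (t : T) :=
  P t /\ forall x, P x -> add x t = t.

Definition right_absorbing_on (T : Type) (P : T -> Prop) (mul : T -> T -> T) (r : T) :=
  forall s, P s -> mul s r = r.

Definition left_absorbing_on (T : Type) (P : T -> Prop) (mul : T -> T -> T) (r : T) :=
  forall s, P s -> mul r s = r.

Definition top_left_not_right_on (T : Type) (P : T -> Prop) (add mul : T -> T -> T) :=
  exists t, [/\ greatest_on P add t, left_absorbing_on P mul t &
                ~ right_absorbing_on P mul t].

Section JM.
Context {d : Order.disp_t} {L : finTJoinSemilatticeType d}.

Definition is_jm (f : {ffun L -> L}) : Prop :=
  forall x y, f (x `|` y) = f x `|` f y.

Definition jm_join (f g : {ffun L -> L}) : {ffun L -> L} := [ffun x => f x `|` g x].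
Definition jm_comp (f g : {ffun L -> L}) : {ffun L -> L} := [ffun x => f (g x)].
Definition kconst (a : L) : {ffun L -> L} := [ffun=> a].

Definition jm_subsemiring (R : {set {ffun L -> L}}) : Prop :=
  [/\ R != set0,
      (forall f, f \in R -> is_jm f) &
      (forall f g, f \in R -> g \in R -> jm_join f g \in R /\ jm_comp f g \in R)].

Definition cond_i (R : {set {ffun L -> L}}) : Prop := forall a : L, kconst a \in R.
Definition cond_ii (R : {set {ffun L -> L}}) : Prop :=
  forall f, f \in R -> exists a : L, forall x, a <= f x.
Definition cond_iii (R : {set {ffun L -> L}}) : Prop :=
  forall a b : L, b != \top -> exists2 f, f \in R &
    forall x, (x <= a -> f x = b) /\ (~~ (x <= a) -> b < f x).

Definition good_R (R : {set {ffun L -> L}}) : Prop :=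
  [/\ jm_subsemiring R, cond_i R, cond_ii R & cond_iii R].
End JM.

(* Main.v *)
Require Import Defs.
From HB Require Import structures.
From mathcomp Require Import all_boot all_order.
Set Implicit Arguments. Unset Strict Implicit. Unset Printing Implicit Defensive.
Import Order.TTheory.
Local Open Scope order_scope.

Record aiprops (S : Type) (add mul : S -> S -> S) (w : S) : Prop := AIProps {
  pA : associative add; pC : commutative add; pI : forall x, add x x = x;
  pMA : associative mul;
  pRD : forall x y z, mul (add x y) z = add (mul x z) (mul y z);
  pLD : forall x y z, mul x (add y z) = add (mul x y) (mul x z);
  pW : forall x, add x w = w; pWL : forall x, mul w x = w }.

Definition Cty (S : finType) (add mul : S -> S -> S) (w : S)
  (H : aiprops add mul w) : Type := {x : S | mul x w == x}.

HB.instance Definition _ (S : finType) (add mul : S -> S -> S) (w : S)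
  (H : aiprops add mul w) := Finite.copy (Cty H) {x : S | mul x w == x}.

Section CtyTh.
Variables (S : finType) (add mul : S -> S -> S) (w : S) (H : aiprops add mul w).
Local Notation C := (Cty H).

Definition cle (x y : C) := add (val x) (val y) == val y.
Lemma cle_refl : reflexive cle.
Proof. by move=> x; rewrite /cle (pI H). Qed.
Lemma cle_anti : antisymmetric cle.
Proof. move=> x y /andP[/eqP a /eqP b]; apply: val_inj; by rewrite -b (pC H) a. Qed.
Lemma cle_trans : transitive cle.
Proof.
move=> y x z /eqP a /eqP b; apply/eqP; by rewrite -b (pA H) a.
Qed.
End CtyTh.

HB.instance Definition _ (S : finType) (add mul : S -> S -> S) (w : S)
  (H : aiprops add mul w) :=
  Order.Le_isPOrder.Build (Order.Disp tt tt) (Cty H) (@cle_refl S add mul w H)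
     (@cle_anti S add mul w H) (@cle_trans S add mul w H).

Section CtyTh2.
Variables (S : finType) (add mul : S -> S -> S) (w : S) (H : aiprops add mul w).
Local Notation C := (Cty H).

Lemma cadd_proof (x y : C) : mul (add (val x) (val y)) w == add (val x) (val y).
Proof. by rewrite (pRD H) (eqP (valP x)) (eqP (valP y)). Qed.
Definition cjoin (x y : C) : C := exist (fun z : S => mul z w == z) (add (val x) (val y)) (cadd_proof x y).
Lemma cjoinC : commutative cjoin.
Proof. by move=> x y; apply: val_inj; rewrite /= (pC H). Qed.
Lemma cjoinA : associative cjoin.
Proof. by move=> x y z; apply: val_inj; rewrite /= (pA H). Qed.
Lemma cleE (x y : C) : (x <= y) = cle x y.
Proof. by []. Qed.
Lemma cleEjoin (x y : C) : (y <= x) = (cjoin x y == x).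
Proof. by rewrite cleE -(inj_eq val_inj) /= /cle (pC H). Qed.
Lemma ctop_proof : mul w w == w.
Proof. by rewrite (pWL H). Qed.
Definition ctop : C := exist (fun z : S => mul z w == z) w ctop_proof.
Lemma clex1 (x : C) : x <= ctop.
Proof. by rewrite cleE /cle /= (pW H). Qed.
End CtyTh2.

HB.instance Definition _ (S : finType) (add mul : S -> S -> S) (w : S)
  (H : aiprops add mul w) :=
  Order.POrder_Join_isSemilattice.Build (Order.Disp tt tt) (Cty H) (@cjoinC S add mul w H)
     (@cjoinA S add mul w H) (@cleEjoin S add mul w H).
HB.instance Definition _ (S : finType) (add mul : S -> S -> S) (w : S)
  (H : aiprops add mul w) :=
  Order.hasTop.Build (Order.Disp tt tt) (Cty H) (@clex1 S add mul w H).


From Stdlib Require Import Classical Setoid.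

Section Fwd.
Context {d : Order.disp_t} {L : finTJoinSemilatticeType d}.
Variable R : {set {ffun L -> L}}.
Hypothesis HL : (1 < #|L|)%N.
Hypothesis HR : good_R R.

Lemma comp_k (f : {ffun L -> L}) a : jm_comp f (kconst a) = kconst (f a).
Proof. by apply/ffunP=> x; rewrite !ffunE. Qed.
Lemma join_k a b : jm_join (kconst a) (kconst b) = kconst (a `|` b) :> {ffun L -> L}.
Proof. by apply/ffunP=> x; rewrite !ffunE. Qed.
Lemma k_inj a b : kconst a = kconst b :> {ffun L -> L} -> a = b.
Proof. by move/ffunP/(_ a); rewrite !ffunE. Qed.

Lemma fwd_semiring : semiring_on (fun f => f \in R) jm_join jm_comp.
Proof.
case: HR => [[_ Hjm Hcl] Hi _ _]; split.
- by exists (kconst \top); apply: Hi.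
- by move=> x y; apply: Hcl.
- by move=> x y z _ _ _; split; apply/ffunP=> t; rewrite !ffunE ?joinA.
- by move=> x y _ _; apply/ffunP=> t; rewrite !ffunE joinC.
- move=> x y z Hx _ _; split; apply/ffunP=> t; rewrite !ffunE //.
  by rewrite Hjm.
Qed.

Lemma fwd_idem : add_idempotent_on (fun f => f \in R) jm_join.
Proof. by move=> x _; apply/ffunP=> t; rewrite !ffunE joinxx. Qed.

Lemma exists_nontop : exists a : L, a != \top.
Proof.
case/card_gt1P: HL => x [y [_ _ xy]].
case: (eqVneq x \top) => [ex|]; last by exists x.
by exists y; rewrite -ex eq_sym.
Qed.

Lemma fwd_top : top_left_not_right_on (fun f => f \in R) jm_join jm_comp.
Proof.
case: HR => [[_ Hjm Hcl] Hi _ _]; exists (kconst \top); split.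
- split; first exact: Hi.
  by move=> x _; apply/ffunP=> t; rewrite !ffunE joinx1.
- by move=> s _; apply/ffunP=> t; rewrite !ffunE.
- move=> H; case: exists_nontop => a Ha.
  have := H _ (Hi a); rewrite comp_k ffunE => /k_inj E.
  by rewrite E eqxx in Ha.
Qed.

Lemma fwd_simple : simple_on (fun f => f \in R) jm_join jm_comp.
Proof.
case: HR => [[_ Hjm Hcl] Hi Hii Hiii] r [Hrefl Hsym Htr Hcomp].
set P := fun f => f \in R.
have Hk : forall a, P (kconst a) by [].
have Hc : forall f g, P f -> P g -> P (jm_comp f g) by move=> f g Hf Hg; case: (Hcl f g).
have Hj : forall f g, P f -> P g -> P (jm_join f g) by move=> f g Hf Hg; case: (Hcl f g).
case: (classic (forall x y, P x -> P y -> r x y -> x = y)) => [H|H]; [by left|right].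
have [p [q [pq rpq]]] : exists p q : L, p < q /\ r (kconst p) (kconst q).
  move/not_all_ex_not: H => [f /not_all_ex_not [g H]].
  have [Pf [Pg [rfg nfg]]] : P f /\ P g /\ r f g /\ f <> g by tauto.
  have [x0 Hx0] : exists x0, f x0 != g x0.
    apply: NNPP => H'; apply: nfg; apply/ffunP=> x.
    by apply/eqP/negPn/negP=> hx; apply: H'; exists x.
  have rce : r (kconst (f x0)) (kconst (g x0)).
    rewrite -!comp_k; by case: (Hcomp _ _ _ _ Pf Pg (Hi x0) (Hi x0) rfg (Hrefl _ (Hi x0))).
  have r1 : r (kconst (f x0)) (kconst (f x0 `|` g x0)).
    rewrite -join_k -{1}[kconst (f x0)](fwd_idem (Hi (f x0))).
    by case: (Hcomp _ _ _ _ (Hi _) (Hi _) (Hi _) (Hi _) (Hrefl _ (Hi (f x0))) rce).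
  have r2 : r (kconst (g x0)) (kconst (f x0 `|` g x0)).
    apply: Hsym => //; rewrite -join_k -{2}[kconst (g x0)](fwd_idem (Hi (g x0))).
    by case: (Hcomp _ _ _ _ (Hi _) (Hi _) (Hi _) (Hi _) rce (Hrefl _ (Hi (g x0)))).
  case: (eqVneq (f x0) (f x0 `|` g x0)) => [E|N].
  - exists (g x0), (f x0 `|` g x0); split => //.
    rewrite lt_def leUr andbT; apply/negP=> /eqP E2.
    by move: Hx0; rewrite {1}E E2 eqxx.
  - exists (f x0), (f x0 `|` g x0); split => //.
    by rewrite lt_def leUl andbT eq_sym.
have climb : forall b : L, b != \top -> exists2 b', b < b' & r (kconst b) (kconst b').
  move=> b nb; case: (Hiii p b nb) => f Rf Hf.
  exists (f q).
    by case: (Hf q) => _ ->; rewrite // lt_geF.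
  case: (Hf p) => /(_ (lexx p)) E _.
  rewrite -E -!comp_k.
  by case: (Hcomp _ _ _ _ Rf Rf (Hi p) (Hi q) (Hrefl _ Rf) rpq).
have toTop : forall b : L, r (kconst b) (kconst \top).
  suff: forall (n : nat) (b : L), (#|[set y : L | (b < y)%O]| <= n)%N -> r (kconst b) (kconst \top).
    by move=> H' b; apply: (H' _ b (leqnn _)).
  elim=> [|n IH] b.
  - rewrite leqn0 => /eqP/cards0_eq E.
    case: (eqVneq b \top) => [->|nb]; first exact: Hrefl.
    case: (climb b nb) => b' bb' _.
    by have := in_set0 b'; rewrite -E inE bb'.
  - move=> Hn; case: (eqVneq b \top) => [->|nb]; first exact: Hrefl.
    case: (climb b nb) => b' bb' rb.
    apply: (Htr _ _ _ (Hi _) (Hi _) (Hi _) rb); apply: IH.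
    rewrite -ltnS; apply: leq_trans Hn; apply: proper_card; apply/properP; split.
      by apply/subsetP=> y; rewrite !inE => /(lt_trans bb').
    by exists b'; rewrite !inE ?ltxx.
have toTop' : forall f, P f -> r f (kconst \top).
  move=> f Pf; case: (Hii f Pf) => a Ha.
  have E1 : jm_join f (kconst a) = f.
    by apply/ffunP=> x; rewrite !ffunE; apply: join_l.
  have E2 : jm_join f (kconst \top) = kconst \top.
    by apply/ffunP=> x; rewrite !ffunE joinx1.
  rewrite -{1}E1 -E2.
  by case: (Hcomp _ _ _ _ Pf Pf (Hi _) (Hi _) (Hrefl _ Pf) (toTop a)).
move=> x y Px Py.
exact: (Htr _ _ _ Px (Hi \top) Py (toTop' _ Px) (Hsym _ _ Py (Hi \top) (toTop' _ Py))).
Qed.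
End Fwd.

Section Conv.
Variables (S : finType) (add mul : S -> S -> S) (w : S) (H : aiprops add mul w).
Let P := fun _ : S => True.
Hypothesis Hsimp : simple_on P add mul.
Hypothesis Hcard : (2 < #|S|)%N.
Hypothesis Hnr : exists s, mul s w <> w.

Definition sle x y := add x y = y.
Definition isC c := mul c w = c.

Lemma sle_refl x : sle x x. Proof. by rewrite /sle (pI H). Qed.
Lemma sle_trans x y z : sle x y -> sle y z -> sle x z.
Proof. by rewrite /sle => a b; rewrite -b (pA H) a. Qed.
Lemma sle_anti x y : sle x y -> sle y x -> x = y.
Proof. by rewrite /sle => a b; rewrite -b (pC H) a. Qed.
Lemma sle_addl x y : sle x (add x y).
Proof. by rewrite /sle (pA H) (pI H). Qed.
Lemma sle_addr x y : sle y (add x y).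
Proof. by rewrite (pC H); apply: sle_addl. Qed.
Lemma sle_add x y z : sle (add x y) z <-> sle x z /\ sle y z.
Proof.
split.
  move=> h; split; [exact: sle_trans (sle_addl _ _) h | exact: sle_trans (sle_addr _ _) h].
by case=> a b; rewrite /sle -(pA H) b a.
Qed.
Lemma sle_mul u x y : sle x y -> sle (mul u x) (mul u y).
Proof. by rewrite /sle => a; rewrite -(pLD H) a. Qed.
Lemma isC_mul s c : isC c -> isC (mul s c).
Proof. by rewrite /isC => h; rewrite -(pMA H) h. Qed.
Lemma isC_add c e : isC c -> isC e -> isC (add c e).
Proof. by rewrite /isC (pRD H) => -> ->. Qed.
Lemma isC_const c s : isC c -> mul c s = c.
Proof. by rewrite /isC => h; rewrite -{1}h -(pMA H) (pWL H) h. Qed.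
Lemma isC_w : isC w. Proof. by rewrite /isC (pWL H). Qed.
Lemma not_w_le B : B <> w -> ~ sle w B.
Proof. by move=> nB; rewrite /sle (pC H) (pW H) => E; apply: nB. Qed.

Local Notation L := (Cty H).
Lemma isC_val (x : L) : isC (val x). Proof. exact/eqP/(valP x). Qed.
Lemma val_join (x y : L) : val (x `|` y) = add (val x) (val y). Proof. by []. Qed.
Lemma val_top : val (\top : L) = w. Proof. by []. Qed.
Lemma leLE (x y : L) : (x <= y) = (add (val x) (val y) == val y). Proof. by []. Qed.

Definition toL (c : S) : L := insubd (\top : L) c.
Lemma val_toL c : isC c -> val (toL c) = c.
Proof. by move=> h; rewrite /toL val_insubd /= h eqxx. Qed.

Definition phi (s : S) : {ffun L -> L} := [ffun c => toL (mul s (val c))].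
Lemma phiE s (x : L) : val (phi s x) = mul s (val x).
Proof. by rewrite ffunE val_toL //; apply/isC_mul/isC_val. Qed.

Lemma phi_add s t : phi (add s t) = jm_join (phi s) (phi t).
Proof. by apply/ffunP=> x; apply: val_inj; rewrite phiE ffunE val_join !phiE (pRD H). Qed.
Lemma phi_mul s t : phi (mul s t) = jm_comp (phi s) (phi t).
Proof. by apply/ffunP=> x; apply: val_inj; rewrite phiE ffunE !phiE (pMA H). Qed.

Lemma congP (r : S -> S -> Prop) :
  (forall x, r x x) -> (forall x y, r x y -> r y x) ->
  (forall x y z, r x y -> r y z -> r x z) ->
  (forall a b c d, r a b -> r c d -> r (add a c) (add b d) /\ r (mul a c) (mul b d)) ->
  (forall x y, r x y -> x = y) \/ (forall x y, r x y).
Proof.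
move=> h1 h2 h3 h4.
case: (Hsimp (r := r)).
- split; first by move=> x _; exact: h1.
  + by move=> x y _ _; exact: h2.
  + by move=> x y z _ _ _; exact: h3.
  + by move=> a b c d _ _ _ _; exact: h4.
- by move=> h; left=> x y; exact: h.
- by move=> h; right=> x y; exact: h.
Qed.

Lemma s0_prop : exists c, isC c /\ c <> w.
Proof.
case: Hnr => s Hs; exists (mul s w); split => //; exact/isC_mul/isC_w.
Qed.

Lemma phi_inj : injective phi.
Proof.
pose r s t := forall c, isC c -> mul s c = mul t c.
case: (@congP r).
- by [].
- by move=> x y h c hc; rewrite h.
- by move=> x y z h1 h2 c hc; rewrite h1 // h2.
- move=> a b c d h1 h2; split=> e he; first by rewrite !(pRD H) h1 // h2.
  by rewrite -!(pMA H) h2 // h1 //; apply: isC_mul.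
- move=> hid s t E; apply: hid => c hc.
  by rewrite -(val_toL hc) -!phiE E.
- move=> hfull; exfalso; case: s0_prop => c [hc nc].
  have := hfull c w w isC_w; rewrite isC_const // (pWL H); exact: nc.
Qed.

Lemma card_L : (1 < #|(L : finType)|)%N.
Proof.
case: s0_prop => c [hc nc]; apply/card_gt1P; exists (toL c), \top; split => //.
by apply/eqP => /(congr1 val); rewrite val_toL.
Qed.

Definition RR : {set {ffun L -> L}} := [set phi s | s : S].

Lemma RRP f : f \in RR <-> exists s, phi s = f.
Proof.
split; first by case/imsetP => s _ ->; exists s.
by case=> s <-; apply: imset_f.
Qed.

Lemma phi_jm s : is_jm (phi s).
Proof. by move=> x y; apply: val_inj; rewrite val_join !phiE val_join (pLD H). Qed.

Lemma phi_const c : isC c -> phi c = kconst (toL c).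
Proof. by move=> hc; apply/ffunP=> x; apply: val_inj; rewrite phiE !ffunE isC_const // val_toL. Qed.

Lemma RR_sub : jm_subsemiring RR.
Proof.
split.
- by apply/set0Pn; exists (phi w); apply/RRP; exists w.
- by move=> f /RRP [s <-]; apply: phi_jm.
- move=> f g /RRP [s <-] /RRP [t <-]; split; apply/RRP.
  + by exists (add s t); rewrite phi_add.
  + by exists (mul s t); rewrite phi_mul.
Qed.

Lemma RR_i : cond_i RR.
Proof.
move=> a; apply/RRP; exists (val a); rewrite phi_const; last exact: isC_val.
by congr kconst; apply: val_inj; rewrite val_toL //; apply: isC_val.
Qed.

Definition U s := exists a, isC a /\ forall c, isC c -> sle a (mul s c).

Lemma U_add_l s t : U s -> U (add s t).
Proof.
case=> a [ha h]; exists a; split => // c hc; rewrite (pRD H).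
exact: sle_trans (h c hc) (sle_addl _ _).
Qed.
Lemma U_add_r s t : U t -> U (add s t).
Proof. by rewrite (pC H); apply: U_add_l. Qed.
Lemma U_mul_l s t : U s -> U (mul s t).
Proof.
case=> a [ha h]; exists a; split => // c hc; rewrite -(pMA H).
by apply: h; apply: isC_mul.
Qed.
Lemma U_mul_r s t : U t -> U (mul s t).
Proof.
case=> a [ha h]; exists (mul s a); split; first exact: isC_mul.
move=> c hc; rewrite -(pMA H); exact: sle_mul (h c hc).
Qed.
Lemma U_C c : isC c -> U c.
Proof. by move=> hc; exists c; split => // e he; rewrite isC_const //; apply: sle_refl. Qed.

Lemma all_U s : U s.
Proof.
pose r s t := s = t \/ (U s /\ U t).
case: (@congP r).
- by move=> x; left.
- by move=> x y [->|[]]; [left|right].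
- move=> x y z [->|[hx hy]] // [<-|[_ hz]]; [by right | by right].
- move=> a b c e [<-|[ha hb]] [<-|[hc he]].
  + by split; left.
  + by split; right; split; apply: U_add_r || apply: U_mul_r.
  + by split; right; split; apply: U_add_l || apply: U_mul_l.
  + by split; right; split; apply: U_add_l || apply: U_mul_l.
- move=> hid; exfalso; case: s0_prop => c [hc nc]; apply: nc; apply: hid.
  by right; split; apply: U_C => //; apply: isC_w.
- move=> hfull; case: (hfull s w) => [->|[]//]; apply: U_C; exact: isC_w.
Qed.

Lemma RR_ii : cond_ii RR.
Proof.
move=> f /RRP [s <-]; case: (all_U s) => a [ha h]; exists (toL a) => x.
by rewrite leLE phiE val_toL //; apply/eqP; apply: h; apply: isC_val.
Qed.

Section Three.
Variable B : S.
Hypothesis hB : isC B.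
Hypothesis nB : B <> w.

Definition theta s t := forall u c, isC c ->
  (sle (mul u (mul s c)) B <-> sle (mul u (mul t c)) B).

Lemma theta_not_full : ~ (forall s t, theta s t).
Proof.
move=> hfull.
pose r2 s t := (sle (mul s w) B <-> sle (mul t w) B).
have key : forall a c, sle (mul (mul a c) w) B <-> sle (mul a w) B.
  move=> a c; have := hfull (mul c w) w a w isC_w.
  rewrite (@isC_const (mul c w) w); last by apply: isC_mul; apply: isC_w.
  by rewrite (pWL H) (pMA H).
case: (@congP r2).
- by move=> x.
- by move=> x y; rewrite /r2; tauto.
- by move=> x y z; rewrite /r2; tauto.
- move=> a b c e; rewrite /r2 => h1 h2; split.
  + rewrite !(pRD H) !sle_add; tauto.
  + rewrite !key; tauto.
- move=> hid.
  have two : forall s, s = B \/ s = w.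
    move=> s; case: (classic (sle (mul s w) B)) => h.
    + left; apply: hid; rewrite /r2 (@isC_const B w hB); split=> _; [exact: sle_refl | exact: h].
    + right; apply: hid; rewrite /r2 (pWL H); split=> // h'; exfalso.
      exact: not_w_le h'.
  have : (#|S| <= #|[set B; w]|)%N.
    apply: subset_leq_card; apply/subsetP => s _; rewrite !inE.
    by case: (two s) => ->; rewrite eqxx ?orbT.
  by rewrite cards2 => h; move: Hcard; rewrite ltnNge (leq_trans h) //; case: (B != w).
- move=> hfull2; have := hfull2 B w; rewrite /r2 (pWL H) (@isC_const B w hB) => h.
  by apply: (not_w_le nB); apply/h; apply: sle_refl.
Qed.

Lemma theta_id s t : theta s t -> s = t.
Proof.
case: (@congP theta).
- by move=> x.
- by move=> x y h u c hc; move: (h u c hc); tauto.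
- by move=> x y z h1 h2 u c hc; move: (h1 u c hc) (h2 u c hc); tauto.
- move=> a b c e h1 h2; split => u x hx.
  + by rewrite !(pRD H) !(pLD H) !sle_add h1 // h2.
  + have e1 := h1 u (mul c x) (isC_mul c hx).
    have e2 := h2 (mul u b) x hx.
    rewrite -!(pMA H) in e2 *; tauto.
- by move=> hid; apply: hid.
- by move=> hfull; exfalso; apply: theta_not_full.
Qed.

Lemma sep A y : isC A -> isC y -> ~ sle y A ->
  exists u, sle (mul u A) B /\ ~ sle (mul u y) B.
Proof.
move=> hA hy nyA.
have nth : ~ theta A (add A y).
  move=> /theta_id E; apply: nyA; by rewrite /sle (pC H) -E.
apply: NNPP => nex; apply: nth => u c hc.
rewrite (@isC_const A c hA) (@isC_const (add A y) c (isC_add hA hy)).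
rewrite (pLD H) sle_add.
split; first by move=> h; split => //; apply: NNPP => h2; apply: nex; exists u.
by case.
Qed.

Variable A : S.
Hypothesis hA : isC A.

Definition lst := [seq u <- enum S | add (mul u A) B == B].
Definition fS := foldr add B lst.

Lemma fS_le x : isC x -> sle x A -> sle (mul fS x) B.
Proof.
move=> hx hxA; rewrite /fS.
have : forall u, u \in lst -> sle (mul u A) B.
  by move=> u; rewrite mem_filter => /andP [/eqP h _].
elim: lst => [|u l IH] hl /=; first by rewrite isC_const //; apply: sle_refl.
rewrite (pRD H) sle_add; split; last by apply: IH => v hv; apply: hl; rewrite inE hv orbT.
apply: sle_trans (sle_mul u hxA) _; apply: hl; exact: mem_head.
Qed.

Lemma fS_ge x : sle B (mul fS x).
Proof.
rewrite /fS; elim: lst => [|u l IH] /=; first by rewrite isC_const //; apply: sle_refl.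
rewrite (pRD H); exact: sle_trans IH (sle_addr _ _).
Qed.

Lemma fS_mem u x : u \in lst -> sle (mul u x) (mul fS x).
Proof.
rewrite /fS; elim: lst => [|v l IH] //=; rewrite inE (pRD H) => /orP [/eqP ->|h].
  exact: sle_addl.
exact: sle_trans (IH h) (sle_addr _ _).
Qed.
End Three.

Lemma RR_iii : cond_iii RR.
Proof.
move=> a b nb.
have hB := isC_val b; have hA := isC_val a.
have nB : val b <> w by move=> E; move/eqP: nb; apply; apply: val_inj; by rewrite E val_top.
exists (phi (fS (val b) (val a))); first by apply/RRP; eexists.
move=> x; split.
- rewrite leLE => /eqP hx; apply: val_inj; rewrite phiE.
  apply: sle_anti; first exact: fS_le (isC_val x) hx.
  exact: fS_ge.
- rewrite leLE => hx; rewrite lt_def; apply/andP; split.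
  + apply/negP => /eqP /(congr1 val); rewrite phiE => E.
    have nxa : ~ sle (val x) (val a) by move=> h; move: hx; rewrite h eqxx.
    case: (sep hB nB hA (isC_val x) nxa) => u [h1 h2].
    apply: h2; rewrite -E; apply: fS_mem.
    by rewrite mem_filter mem_enum andbT; apply/eqP.
  + rewrite leLE phiE; apply/eqP; exact: fS_ge.
Qed.

Lemma RR_good : good_R RR.
Proof. split; [exact: RR_sub | exact: RR_i | exact: RR_ii | exact: RR_iii]. Qed.
End Conv.
Theorem theorem5p3 :
  (* forward direction *)
  (forall (d : Order.disp_t) (L : finTJoinSemilatticeType d)
          (R : {set {ffun L -> L}}),
      (1 < #|L|)%N -> good_R R ->
      let P := fun f => f \in R in
      [/\ semiring_on P jm_join jm_comp,
          add_idempotent_on P jm_join,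
          simple_on P jm_join jm_comp &
          top_left_not_right_on P jm_join jm_comp]) /\
  (* converse *)
  (forall (S : finType) (add mul : S -> S -> S),
      let P := fun _ : S => True in
      semiring_on P add mul -> add_idempotent_on P add ->
      simple_on P add mul -> (2 < #|S|)%N ->
      top_left_not_right_on P add mul ->
      exists (d : Order.disp_t) (L : finTJoinSemilatticeType d)
             (R : {set {ffun L -> L}}) (phi : S -> {ffun L -> L}),
        [/\ (1 < #|L|)%N, good_R R, injective phi &
            (forall f, f \in R <-> exists s, phi s = f)] /\
        [/\ 
            (forall s t, phi (add s t) = jm_join (phi s) (phi t)) &
            (forall s t, phi (mul s t) = jm_comp (phi s) (phi t))]).
Proof.
split.
  move=> d L R HL HR P; split.
  - exact: fwd_semiring.
  - exact: fwd_idem.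
  - exact: fwd_simple.
  - exact: fwd_top.
move=> S add mul P [_ _ Has Hc Hd] Hid Hsimp Hcard [t [[_ Hg] Hl Hnr]].
have H : aiprops add mul t.
  split.
  - by move=> x y z; case: (Has x y z I I I).
  - by move=> x y; apply: Hc.
  - by move=> x; apply: Hid.
  - by move=> x y z; case: (Has x y z I I I).
  - by move=> x y z; case: (Hd x y z I I I).
  - by move=> x y z; case: (Hd x y z I I I).
  - by move=> x; apply: Hg.
  - by move=> x; apply: Hl.
have Hnr' : exists s, mul s t <> t.
  apply: NNPP => h; apply: Hnr => s _; apply: NNPP => h2; apply: h; by exists s.
exists (Order.Disp tt tt), (Cty H), (RR H), (phi H); split; split.
- exact: card_L.
- exact: RR_good.
- exact: phi_inj.
- exact: RRP.
- exact: phi_add.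
- exact: phi_mul.
Qed.
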